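(* Let $d\ge1$ be an integer and $p=(d+1)(d+2)/2$. Let $f(x,y)=\sum_{a,b\ge0,\,a+b\le d} c_{a,b}\,x^{2a}y^{2b}$ (i.e. $f=c_0+c_1x^2+c_2y^2+\cdots+c_{p-1}y^{2d}$, a real linear combination of the $p$ monomials $x^{2a}y^{2b}$ with $a+b\le d$) with all coefficients satisfying $|c|\le 1$. Let $\delta>0$ and for $i=1,\dots,N$ let $S_i=\{(x,y)\mid x=x_i>0,\ 0<y_i-\delta\le y\le y_i+\delta\}$, and suppose the curve $f=0$ passes through (meets) every $S_i$. Then $$\sum_{i=1}^N f(x_i,y_i)^2\le 2(d+1)(d+2)\,\delta^2\sum_{i=1}^N h_d(x_i,y_i+\delta),\qquad h_d(x,y)=y^2\sum_{l,j\ge0,\ l+j\le d-1}(l+1)^2x^{4j}y^{4l}.$$ In particular $h_2(x,y)=y^2(1+x^4+4y^4)$, $h_3(x,y)=y^2(1+x^4+4y^4+x^8+4x^4y^4+9y^8)$, and $h_4(x,y)=y^2(1+x^4+4y^4+x^8+4x^4y^4+9y^8+x^{12}+4x^8y^4+9x^4y^8+16y^{12})$. *)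

(* Defs.v *)
From HB Require Import structures.
From mathcomp Require Import all_boot all_order all_algebra.
From mathcomp Require Import reals.
Set Implicit Arguments. Unset Strict Implicit. Unset Printing Implicit Defensive.
Import Order.TTheory GRing.Theory Num.Theory.
Local Open Scope ring_scope.

Definition fpoly (R : realType) (d : nat) (c : nat -> nat -> R) (x y : R) : R :=
  \sum_(a < d.+1) \sum_(b < d.+1 - a) c a b * x ^+ (2 * a) * y ^+ (2 * b).

Definition hfun (R : realType) (d : nat) (x y : R) : R :=
  y ^+ 2 * \sum_(l < d) \sum_(j < d - l)
              ((l.+1) ^ 2)%:R * x ^+ (4 * j) * y ^+ (4 * l).

(* Main.v *)
Require Import Defs.
From HB Require Import structures.
From mathcomp Require Import all_boot all_order all_algebra.
From mathcomp Require Import reals.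
From mathcomp Require Import ring lra zify.
Import Order.TTheory GRing.Theory Num.Theory.
Local Open Scope ring_scope.
Lemma powdiff (R : realFieldType) {u v Y : R} (n : nat) :
  0 <= u -> 0 <= v -> u <= Y -> v <= Y ->
  `|u ^+ n - v ^+ n| <= n%:R * Y ^+ n.-1 * `|u - v|.
Proof.
move=> u0 v0 uY vY.
rewrite subrXX normrM mulrC; apply: ler_wpM2r => //.
apply: le_trans (ler_norm_sum _ _ _) _.
have -> : n%:R * Y ^+ n.-1 = \sum_(i < n) Y ^+ n.-1 by rewrite sumr_const card_ord mulr_natl.
rewrite ler_sum // => i _.
have Y0 : 0 <= Y by apply: le_trans uY.
rewrite normrM !normrX (ger0_norm u0) (ger0_norm v0).
have -> : n.-1 = (n.-1 - i + i)%N by have := ltn_ord i; lia.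
rewrite exprD addnK; apply: ler_pM; rewrite ?exprn_ge0 //; apply: lerXn2r; rewrite // inE.
Qed.
Lemma dsum_const (R : realFieldType) (m : nat) (n : nat -> nat) (c : R) :
  \sum_(a<m) \sum_(b < n a) c = (\sum_(a<m) (n a)%:R) * c.
Proof. rewrite mulr_suml; apply: eq_bigr => a _; by rewrite sumr_const card_ord mulr_natl. Qed.

Lemma cs_nested (R : realFieldType) (m : nat) (n : nat -> nat) (F : nat -> nat -> R) :
 (\sum_(a<m) \sum_(b < n a) F a b)^+2 <=
   (\sum_(a<m) (n a)%:R) * \sum_(a<m) \sum_(b<n a) F a b ^+2.
Proof.
set S := \sum_(a<m) _; set M := \sum_(a<m) _; set Q := \sum_(a<m) _.
have e0 : S * S = \sum_(a<m) \sum_(b < n a) \sum_(a'<m) \sum_(b' < n a') (F a b * F a' b').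
  rewrite {1}/S mulr_suml; apply: eq_bigr => a _; rewrite mulr_suml; apply: eq_bigr => b _.
  rewrite /S mulr_sumr; apply: eq_bigr => a' _; by rewrite mulr_sumr.
have e1 : 2 * S ^+ 2 = \sum_(a<m) \sum_(b < n a) \sum_(a'<m) \sum_(b' < n a') 2 * (F a b * F a' b').
  rewrite expr2 e0 mulr_sumr; apply: eq_bigr => a _; rewrite mulr_sumr; apply: eq_bigr => b _.
  rewrite mulr_sumr; apply: eq_bigr => a' _; by rewrite mulr_sumr.
have e2 : \sum_(a<m) \sum_(b < n a) \sum_(a'<m) \sum_(b' < n a') (F a b ^+ 2 + F a' b' ^+ 2) = 2 * (M * Q).
  have -> : \sum_(a<m) \sum_(b < n a) \sum_(a'<m) \sum_(b' < n a') (F a b ^+ 2 + F a' b' ^+ 2)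
     = \sum_(a<m) \sum_(b < n a) (M * F a b ^+ 2 + Q).
    apply: eq_bigr => a _; apply: eq_bigr => b _.
    have -> : \sum_(a'<m) \sum_(b' < n a') (F a b ^+ 2 + F a' b' ^+ 2) =
       \sum_(a'<m) \sum_(b' < n a') F a b ^+ 2 + Q.
      rewrite /Q -big_split /=; apply: eq_bigr => a' _; by rewrite -big_split.
    by rewrite dsum_const.
  rewrite (eq_bigr (fun a : 'I_m => \sum_(b < n a) (M * F a b ^+ 2) + \sum_(b < n a) Q)); last first.
    by move=> a _; rewrite big_split.
  rewrite big_split /= dsum_const -/M.
  have -> : \sum_(a<m) \sum_(b < n a) M * F a b ^+ 2 = M * Q.
    rewrite /Q mulr_sumr; apply: eq_bigr => a _; by rewrite mulr_sumr.
  ring.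
have : 2 * S ^+ 2 <= 2 * (M * Q).
  rewrite e1 -e2; do 4! (apply: ler_sum => ? _).
  set p := F _ _; set q := F _ _.
  have := sqr_ge0 (p - q); rewrite !expr2; lra.
lra.
Qed.
Lemma tri_exchange (R : zmodType) d (G : nat -> nat -> R) :
 \sum_(a<d) \sum_(l < d - a) G a l = \sum_(l<d) \sum_(a < d - l) G a l.
Proof.
have h1 : forall a : 'I_d, \sum_(l < d - a) G a l = \sum_(l<d) (if (a + l < d)%N then G a l else 0).
  move=> a; rewrite (big_ord_widen d (G a)) ?leq_subr // big_mkcond; apply: eq_bigr => l _.
  have -> : (l < d - a)%N = (a + l < d)%N by apply/idP/idP; lia.
  by [].
have h2 : forall l : 'I_d, \sum_(a < d - l) G a l = \sum_(a<d) (if (a + l < d)%N then G a l else 0).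
  move=> l; rewrite (big_ord_widen d (G ^~ l)) ?leq_subr // big_mkcond; apply: eq_bigr => a _.
  have -> : (a < d - l)%N = (a + l < d)%N by apply/idP/idP; lia.
  by [].
rewrite (eq_bigr _ (fun a _ => h1 a)) (eq_bigr _ (fun l _ => h2 l)).
exact: exchange_big.
Qed.

Lemma tri_count n : (\sum_(a<n) (n - a)).*2 = (n * n.+1)%N.
Proof.
elim: n => [|n IH]; first by rewrite big_ord0.
rewrite big_ord_recr /=.
have -> : \sum_(i<n) (n.+1 - i)%N = (\sum_(i<n) (n - i) + n)%N.
  rewrite -[X in (_ + X)%N](card_ord n) -sum1_card -big_split /=.
  apply: eq_bigr => i _; have := ltn_ord i; lia.
rewrite !doubleD IH; lia.
Qed.
Lemma Qeq (R : realType) d (x Y : R) :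
  \sum_(a < d.+1) \sum_(b < d.+1 - a)
      ((2 * b)%:R * x ^+ (2 * a) * Y ^+ (2 * b).-1) ^+ 2 = 4 * hfun d x Y.
Proof.
pose g a l := ((l.+1) ^ 2)%:R * x ^+ (4 * a) * Y ^+ (4 * l).
have t0 : forall a : nat, ((2 * 0)%:R * x ^+ (2 * a) * Y ^+ (2 * 0).-1) ^+ 2 = 0.
  by move=> a; rewrite muln0 !mul0r expr0n.
have tS : forall a l : nat, ((2 * l.+1)%:R * x ^+ (2 * a) * Y ^+ (2 * l.+1).-1) ^+ 2
     = 4 * Y ^+ 2 * g a l.
  move=> a l; rewrite /g.
  have -> : (2 * l.+1).-1 = (2 * l).+1 by lia.
  have -> : (4 * a = 2 * a * 2)%N by lia.
  have -> : (4 * l = 2 * l * 2)%N by lia.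
  rewrite (exprM x (2 * a) 2) (exprM Y (2 * l) 2) (exprS Y (2 * l)) natrM natrX.
  move: (x ^+ (2 * a)) (Y ^+ (2 * l)) => X Z; ring.
have step : forall a : 'I_d.+1, \sum_(b < d.+1 - a)
      ((2 * b)%:R * x ^+ (2 * a) * Y ^+ (2 * b).-1) ^+ 2 =
      4 * Y ^+ 2 * \sum_(l < d - a) g a l.
  move=> a; have ha : (a <= d)%N by rewrite -ltnS.
  rewrite subSn // big_ord_recl t0 add0r mulr_sumr.
  apply: eq_bigr => l _; by rewrite lift0 tS.
rewrite (eq_bigr _ (fun a _ => step a)) big_ord_recr /= subnn big_ord0 mulr0 addr0.
rewrite -mulr_sumr /hfun -(tri_exchange _ d g) /g; ring.
Qed.

Lemma point (R : realType) (d : nat) (c : nat -> nat -> R)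
  (hc : forall a b : nat, (a + b <= d)%N -> `|c a b| <= 1)
  (delta : R) (hdelta : 0 < delta) (x y0 ys : R)
  (hx : 0 < x) (hy : 0 < y0 - delta)
  (hys : y0 - delta <= ys <= y0 + delta) (hz : fpoly d c x ys = 0) :
  (fpoly d c x y0) ^+ 2
    <= 2 * ((d + 1) * (d + 2))%:R * delta ^+ 2 * hfun d x (y0 + delta).
Proof.
set Y := y0 + delta.
pose t (a b : nat) := (2 * b)%:R * x ^+ (2 * a) * Y ^+ (2 * b).-1.
set S := \sum_(a < d.+1) \sum_(b < d.+1 - a) t a b.
case/andP: hys => hys1 hys2.
have hys0 : 0 <= ys by lra.
have hy00 : 0 <= y0 by lra.
have step1 : `|fpoly d c x y0| <= delta * S.
  have -> : fpoly d c x y0 = fpoly d c x y0 - fpoly d c x ys by rewrite hz subr0.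
  rewrite /fpoly -sumrB; apply: le_trans (ler_norm_sum _ _ _) _.
  rewrite /S mulr_sumr; apply: ler_sum => a _.
  rewrite -sumrB; apply: le_trans (ler_norm_sum _ _ _) _.
  rewrite mulr_sumr; apply: ler_sum => b _.
  have hab : (a + b <= d)%N by have := ltn_ord b; have := ltn_ord a; lia.
  have hcb := hc _ _ hab.
  have hY : y0 <= Y by rewrite /Y; lra.
  have hD := @powdiff R y0 ys Y (2 * b) hy00 hys0 hY hys2.
  have hd1 : `|y0 - ys| <= delta by rewrite ler_norml; apply/andP; split; lra.
  rewrite -mulrBr normrM normrM (ger0_norm (exprn_ge0 _ (ltW hx))).
  set X := x ^+ (2 * a) in hD *; set D := `|_ - _| in hD *.
  set K := (2 * b)%:R * Y ^+ (2 * b).-1 in hD.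
  have hK : 0 <= K by rewrite /K mulr_ge0 // exprn_ge0 // /Y; lra.
  have hX : 0 <= X by rewrite exprn_ge0 // ltW.
  have hD0 : 0 <= D by apply: normr_ge0.
  have hc0 : 0 <= `|c a b| by apply: normr_ge0.
  have e : delta * t a b = X * (K * delta).
    by rewrite /t /K /X; move: (x ^+ (2 * a)) (Y ^+ (2 * b).-1) ((2 * b)%:R : R) => p q r; ring.
  rewrite e.
  have h1 : 0 <= (1 - `|c a b|) * (X * D) by rewrite mulr_ge0 // ?mulr_ge0 // subr_ge0.
  have h2 : 0 <= X * (K * delta - D).
    rewrite mulr_ge0 // subr_ge0; apply: (le_trans hD); rewrite ler_wpM2l //.
  lra.
have hS : 0 <= S.
  apply: sumr_ge0 => a _; apply: sumr_ge0 => b _.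
  rewrite /t mulr_ge0 // ?mulr_ge0 // ?exprn_ge0 // ?ltW // /Y; lra.
have step2 : (fpoly d c x y0) ^+ 2 <= delta ^+ 2 * S ^+ 2.
  rewrite -exprMn -(ger0_norm (sqr_ge0 (fpoly d c x y0))) normrX.
  apply: lerXn2r; [by rewrite nnegrE normr_ge0 | by rewrite nnegrE mulr_ge0 // ltW | exact: step1].
have step3 := cs_nested _ d.+1 (fun a => (d.+1 - a)%N) t.
rewrite -/S /t Qeq in step3.
have hM : 2 * \sum_(a < d.+1) ((d.+1 - a)%N)%:R = ((d + 1) * (d + 2))%:R :> R.
  rewrite -natr_sum -natrM mul2n tri_count addn1 addn2 //.
apply: (le_trans step2).
have hd2 : 0 <= delta ^+ 2 by apply: sqr_ge0.
apply: (le_trans (ler_wpM2l hd2 step3)).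
rewrite -hM le_eqVlt; apply/orP; left; apply/eqP; ring.
Qed.

Theorem corollary5 (R : realType) (d : nat) (hd : (1 <= d)%N)
  (c : nat -> nat -> R)
  (hc : forall a b : nat, (a + b <= d)%N -> `|c a b| <= 1)
  (delta : R) (hdelta : 0 < delta)
  (N : nat) (xs ys : 'I_N -> R)
  (hx : forall i, 0 < xs i)
  (hy : forall i, 0 < ys i - delta)
  (hmeet : forall i, exists y : R,
      ys i - delta <= y <= ys i + delta /\ fpoly d c (xs i) y = 0) :
  \sum_(i < N) (fpoly d c (xs i) (ys i)) ^+ 2
    <= 2 * ((d + 1) * (d + 2))%:R * delta ^+ 2
         * \sum_(i < N) hfun d (xs i) (ys i + delta).
Proof.
rewrite mulr_sumr; apply: ler_sum => i _.
have [y [hy1 hy2]] := hmeet i.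
exact: (@point _ _ _ hc _ hdelta _ _ _ (hx i) (hy i) hy1 hy2).
Qed.
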